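(* Let $T$ be a triangulation of an unpunctured bordered surface $(S,M)$, $Q=Q_{\overline T}$ and $F_1,\dots,F_n$ the associated exchange polynomials. If $F_i=F_j$ for some $i\neq j$, then $Q$ contains neither a subquiver $\tilde k\leftarrow i\rightarrow k$ nor a double arrow $i\xrightarrow{2}k$, for any vertex $k$ of $Q$.
   Context: $(S,M)$: compact surface (possibly non-orientable) with nonempty boundary, marked points $M\subset\partial S$ meeting every boundary component, no punctures, not a monogon/digon/triangle (boundary segments may or may not receive variables; if not, their quiver vertices are deleted). Quasi-arcs: arcs (up to isotopy) not bounding a Möbius strip with one marked point, and one-sided simple closed curves; compatible = disjoint, or the unique arc and one-sided curve in a Möbius strip with one marked point. Triangulation: maximal compatible set without one-sided curves. Double cover and quiver: replace each cross-cap by a cylinder to get $\tilde S$, glue two copies along new cylinder boundaries by the antipodal map (two oppositely oriented copies if $S$ orientable); $T$ lifts to $\overline T$ with lifts $i,\tilde i$ ($\tilde{\tilde i}=i$). $Q_{\overline T}$: vertices arcs (and boundary segments with variables) of $\overline T$; arrow $i\to j$ for each triangle where $j$ follows $i$ in the orientation; 2-cycles cancelled; $b_{ij}$ = (arrows $i\to j$) $-$ (arrows $j\to i$). $F_j=\prod_{b_{ij}+b_{\tilde ij}>0}x_i^{b_{ij}+b_{\tilde ij}}+\prod_{b_{ij}+b_{\tilde ij}<0}x_i^{-(b_{ij}+b_{\tilde ij})}$ over twin-pair representatives $i$. *)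

(* Defs.v *)
(* Combinatorial model of a triangulation of an unpunctured
   bordered surface as a gluing of ideal triangles. *)
From mathcomp Require Import all_boot all_algebra.
From mathcomp Require Import mpoly.
Set Implicit Arguments. Unset Strict Implicit. Unset Printing Implicit Defensive.
Import GRing.Theory Num.Theory.

(* Triangle t has corners 0,1,2 (in the order of its local orientation);
   side (t,c) runs from corner c to corner c+1 (mod 3). *)
Definition side (n : nat) := ('I_n * 'I_3)%type.

(* glue s = Some (s', b): side s is glued to side s' (an arc of T);
   b = false: orientation-compatible gluing (start of s ~ end of s'),
   b = true : twisted gluing (start of s ~ start of s').
   glue s = None : s is a boundary segment. *)
Definition gluing (n : nat) := side n -> option (side n * bool).

Section Defs.
Variables (n : nat) (glue : gluing n).

Definition sstart (s : side n) : side n := s.            (* corner = (t,c) *)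
Definition send (s : side n) : side n := (s.1, ordS s.2).

Definition cadj : rel (side n) := fun x y =>
  [exists s : side n, exists s' : side n, exists b : bool,
     (glue s == Some (s', b)) &&
     (((x == sstart s) && (y == (if b then sstart s' else send s'))) ||
      ((x == send s) && (y == (if b then send s' else sstart s'))))].

Definition free_corner (x : side n) : bool :=
  (glue x == None) || (glue (x.1, ord_pred x.2) == None).

Definition tadj : rel 'I_n := fun t t' =>
  [exists c : 'I_3, exists c' : 'I_3, exists b : bool,
     glue (t, c) == Some ((t', c'), b)].

Record is_triangulation : Prop := {
  glue_sym : forall s s' b, glue s = Some (s', b) -> glue s' = Some (s, b);
  glue_irr : forall s s' b, glue s = Some (s', b) -> s' <> s;
  surf_connected : forall t t', connect tadj t t';
  (* no punctures: every marked point (class of corners) lies on the boundary *)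
  no_punctures : forall x, exists y, connect cadj x y && free_corner y;
  (* (S,M) is not a single triangle (monogon/digon admit no triangulation) *)
  not_triangle : exists s, glue s != None;
  (* no arc bounds a Mobius strip with one marked point *)
  no_M1_arc : forall (t : 'I_n) (c : 'I_3),
      glue (t, c) = Some ((t, ordS c), true) -> glue (t, ordS (ordS c)) = None
}.

(* triangle (t,e) of the cover: e = false keeps the orientation of t,
   e = true reverses it; (t,e) and (t,~~e) are twins. *)
Definition cside := (('I_n * bool) * 'I_3)%type.
Definition proj (x : cside) : side n := (x.1.1, x.2).
Definition lift (s : side n) (e : bool) : cside := ((s.1, e), s.2).
Definition twin (x : cside) : cside := ((x.1.1, ~~ x.1.2), x.2).

Definition cpartner (x : cside) : option cside :=
  match glue (proj x) with
  | Some (s', b) => Some (lift s' (x.1.2 (+) b))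
  | None => None
  end.

Definition same_edge (x y : cside) : bool := (x == y) || (cpartner x == Some y).

Definition cnext (x : cside) : cside :=
  (x.1, if x.1.2 then ord_pred x.2 else ordS x.2).

(* number of arrows (before cancelling 2-cycles) from edge x to edge y *)
Definition narrows (x y : cside) : nat :=
  #|[pred u : cside | same_edge u x && same_edge (cnext u) y]|.

Definition bq (x y : cside) : int := (narrows x y)%:Z - (narrows y x)%:Z.

Variable bv : pred (side n). (* boundary segments that carry a variable *)

(* the edge of T through side s is a vertex of Q (arc, or boundary
   segment with a variable) *)
Definition isQv (s : side n) : bool := (glue s != None) || bv s.

Definition trep (s : side n) : side n :=
  match glue s with
  | Some (s', _) => if (enum_rank s' < enum_rank s)%N then s' else s
  | None => s
  end.

Definition expo (r j : side n) : int :=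
  bq (lift r false) (lift j false) + bq (lift r true) (lift j false).

Local Open Scope ring_scope.
Definition Fpoly (j : side n) : {mpoly int[#|{: side n}|]} :=
  \prod_(r : side n | (trep r == r) && isQv r && (0 < expo r j))
      'X_(enum_rank r) ^+ absz (expo r j)
  + \prod_(r : side n | (trep r == r) && isQv r && (expo r j < 0))
      'X_(enum_rank r) ^+ absz (expo r j).

End Defs.

(* Main.v *)
Require Import Defs.
From mathcomp Require Import all_boot all_algebra.
From mathcomp Require Import mpoly.
From mathcomp Require Import zify lra.
Set Implicit Arguments. Unset Strict Implicit. Unset Printing Implicit Defensive.
Import GRing.Theory Num.Theory.
Local Open Scope ring_scope.

Ltac o3 c := case: c => [[|[|[|?]]] ?] //.
Lemma o3_cover (c s : 'I_3) : [\/ s = c, s = ordS c | s = ordS (ordS c)].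
Proof.
o3 c; o3 s; by [apply: Or31; apply/val_inj | apply: Or32; apply/val_inj | apply: Or33; apply/val_inj].
Qed.
Lemma o3_adj (a b : 'I_3) : a != b -> b = ordS a \/ a = ordS b.
Proof.
o3 a; o3 b; rewrite /= => H; by [left; apply/val_inj | right; apply/val_inj | move/negP: H; case; apply/eqP/val_inj].
Qed.
Lemma o3_Sinj (a b : 'I_3) : ordS a = ordS b -> a = b.
Proof. by o3 a; o3 b; move/(congr1 val) => //= ; move=> _; apply/val_inj. Qed.
Lemma o3_predS (c : 'I_3) : ord_pred (ordS c) = c.
Proof. by apply/val_inj; o3 c. Qed.

Lemma no4 n (s1 s2 s3 s4 : 'I_n * 'I_3) : s1.1 = s2.1 -> s1.1 = s3.1 -> s1.1 = s4.1 ->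
  s1 != s2 -> s1 != s3 -> s1 != s4 -> s2 != s3 -> s2 != s4 -> s3 != s4 -> False.
Proof.
case: s1 s2 s3 s4 => [t1 c1] [t2 c2] [t3 c3] [t4 c4] /= <- <- <-.
rewrite !xpair_eqE !eqxx /= -!val_eqE.
by o3 c1; o3 c2; o3 c3; o3 c4.
Qed.

Section S.
Variables (n : nat) (glue : gluing n).
Hypothesis HT : is_triangulation glue.

Local Notation se := (same_edge glue).
Local Notation cp := (cpartner glue).

Lemma twinK : involutive (@twin n).
Proof. by case=> [[t e] c]; rewrite /twin /= negbK. Qed.

Lemma proj_twin (x : cside n) : proj (twin x) = proj x.
Proof. by []. Qed.

Lemma cp_twin (x : cside n) : cp (twin x) = omap (@twin n) (cp x).
Proof.
rewrite /cpartner proj_twin; case: (glue (proj x)) => [[s b]|] //=.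
by rewrite /twin /lift /= addNb.
Qed.

Lemma se_twin (u x : cside n) : se (twin u) (twin x) = se u x.
Proof.
rewrite /same_edge cp_twin (inj_eq (can_inj twinK)).
by case: (cp u) => [y|] //=; rewrite !(inj_eq (@Some_inj _)) (inj_eq (can_inj twinK)).
Qed.

Lemma cnext_twin (u : cside n) : cnext (twin (cnext u)) = twin u.
Proof.
case: u => [[t e] c]; rewrite /cnext /twin /=; congr (_, _).
by case: e => /=; apply/val_inj => /=; case: c => [[|[|[|]]] ?].
Qed.

Lemma cp_sym (x y : cside n) : cp x = Some y -> cp y = Some x.
Proof.
rewrite /cpartner; case E: (glue (proj x)) => [[s b]|] //= [<-].
have E2 := glue_sym HT E.
rewrite /proj /lift /=. 
rewrite -surjective_pairing E2 /=; congr Some.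
by case: x E E2 => [[t e] c] /= E E2; rewrite -addbA addbb addbF.
Qed.

Lemma se_refl (x : cside n) : se x x.
Proof. by rewrite /same_edge eqxx. Qed.

Lemma se_sym (x y : cside n) : se x y -> se y x.
Proof.
rewrite /same_edge => /orP[/eqP->|/eqP/cp_sym->]; first by rewrite eqxx.
by rewrite eqxx orbT.
Qed.

Lemma cp_inj (x y z : cside n) : cp x = Some z -> cp y = Some z -> x = y.
Proof. by move=> /cp_sym H1 /cp_sym; rewrite H1 => -[]. Qed.

Lemma se_trans (a b c : cside n) : se a b -> se b c -> se a c.
Proof.
rewrite /same_edge => /orP[/eqP->//|/eqP Hab] /orP[/eqP<-|/eqP Hbc].
  by rewrite Hab eqxx orbT.
by move/cp_sym: Hab; rewrite Hbc => -[->]; rewrite eqxx.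
Qed.

Lemma se_classE (x x' u : cside n) : se x x' -> se u x = se u x'.
Proof.
move=> H; apply/idP/idP => H2; first exact: se_trans H2 H.
exact: se_trans H2 (se_sym H).
Qed.

Lemma narrows_class (x x' y y' : cside n) :
  se x x' -> se y y' -> narrows glue x y = narrows glue x' y'.
Proof.
move=> H1 H2; apply: eq_card => u /=.
by rewrite !inE (se_classE u H1) (se_classE (cnext u) H2).
Qed.

Lemma bq_class (x x' y y' : cside n) :
  se x x' -> se y y' -> bq glue x y = bq glue x' y'.
Proof. by move=> H1 H2; rewrite /bq (narrows_class H1 H2) (narrows_class H2 H1). Qed.

Lemma narrows_twin (x y : cside n) :
  narrows glue (twin x) (twin y) = narrows glue y x.
Proof.
pose f (u : cside n) := twin (cnext u).
have fK : involutive f by move=> u; rewrite /f cnext_twin twinK.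
rewrite /narrows.
have -> : #|[pred u | se u (twin x) && se (cnext u) (twin y)]|
        = #|f @^-1: [set w | se w y && se (cnext w) x]|.
  apply: eq_card => u; rewrite !inE /f cnext_twin.
  rewrite -[se u (twin x)]se_twin twinK -[se (cnext u) (twin y)]se_twin twinK.
  by rewrite andbC.
rewrite card_preimset; last exact: can_inj fK.
by apply: eq_card => w; rewrite !inE.
Qed.

Lemma bq_twin (x y : cside n) : bq glue (twin x) (twin y) = - bq glue x y.
Proof. by rewrite /bq !narrows_twin opprB. Qed.

Lemma bq_anti (x y : cside n) : bq glue x y = - bq glue y x.
Proof. by rewrite /bq opprB. Qed.

Lemma bq_self (x y : cside n) : se x y -> bq glue x y = 0.
Proof. by move=> H; rewrite (bq_class (se_refl x) (se_sym H)) /bq subrr. Qed.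

Lemma cp_glue (y w : cside n) : cp y = Some w ->
  exists b, glue (proj y) = Some (proj w, b) /\ w.1.2 = y.1.2 (+) b.
Proof.
rewrite /cpartner; case E: (glue (proj y)) => [[s b]|] //= [<-].
by exists b; rewrite /proj /lift /= -surjective_pairing.
Qed.

Lemma cp_proj (y w : cside n) : cp y = Some w -> proj w <> proj y.
Proof. by case/cp_glue=> b [E _]; apply: (glue_irr HT E). Qed.

Lemma cside_eq (x y : cside n) : proj x = proj y -> x.1.2 = y.1.2 -> x = y.
Proof.
by case: x => [[t e] c]; case: y => [[t' e'] c'] [/= -> ->] /= ->.
Qed.

Lemma twin_neq (x : cside n) : twin x <> x.
Proof. by case: x => [[t e] c] [] /=; case: e. Qed.

Lemma se_twin_contra (u x : cside n) : se u x -> se (twin u) x -> False.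
Proof.
rewrite /same_edge => /orP[/eqP->|/eqP H1] /orP[/eqP H2|/eqP H2].
- exact: twin_neq H2.
- rewrite cp_twin in H2; case E: (cp x) H2 => [w|] //= [Hw].
  by apply: (cp_proj E); rewrite -Hw proj_twin.
- by apply: (cp_proj H1); rewrite -H2 proj_twin.
- rewrite cp_twin H1 /= in H2; case: H2; exact: twin_neq.
Qed.

Definition Ed (s a : side n) : bool :=
  (a == s) || (if glue s is Some (s', _) then a == s' else false).

Lemma Ed_refl s : Ed s s.
Proof. by rewrite /Ed eqxx. Qed.

Lemma Ed_sym s a : Ed s a -> Ed a s.
Proof.
rewrite /Ed => /orP[/eqP->|]; first by rewrite eqxx.
case E: (glue s) => [[s' b]|] // /eqP Ha; subst s'.
by rewrite (glue_sym HT E) eqxx orbT.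
Qed.

Lemma Ed_trans s a c : Ed s a -> Ed a c -> Ed s c.
Proof.
rewrite /Ed => /orP[/eqP->//|]; case E: (glue s) => [[s' b]|] // /eqP Ha; subst s'.
rewrite (glue_sym HT E) => /orP[/eqP->|/eqP->]; last by rewrite eqxx.
by rewrite eqxx orbT.
Qed.

Lemma Ed_le2 s a b c : Ed s a -> Ed s b -> Ed s c -> [\/ a = b, a = c | b = c].
Proof.
rewrite /Ed; case: (glue s) => [[s' x]|]; rewrite ?orbF.
  by do 3 (case/orP=> /eqP->); (try by constructor 1); (try by constructor 2); constructor 3.
by move=> /eqP-> /eqP-> /eqP->; constructor 1.
Qed.

Lemma se_Ed (u x : cside n) : se u x -> Ed (proj x) (proj u).
Proof.
rewrite /same_edge => /orP[/eqP->|/eqP H]; first exact: Ed_refl.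
apply: Ed_sym; case/cp_glue: H => b [E _]; by rewrite /Ed E eqxx orbT.
Qed.

Lemma Ed_se (x w : cside n) : Ed (proj x) (proj w) -> se w x || se w (twin x).
Proof.
rewrite /Ed => /orP[/eqP H|].
  case Ew: (w.1.2 == x.1.2).
    by rewrite /same_edge (cside_eq H (eqP Ew)) eqxx.
  apply/orP; right; rewrite /same_edge; apply/orP; left; apply/eqP.
  by apply: cside_eq => //=; move/negbT: Ew; case: (w.1.2); case: (x.1.2).
case E: (glue (proj x)) => [[s' b]|] // /eqP Hs; subst s'.
have E2 := glue_sym HT E.
have Hc : cp w = Some (Defs.lift (proj x) (w.1.2 (+) b)) by rewrite /cpartner E2.
case Ew: (w.1.2 (+) b == x.1.2).
  rewrite /same_edge Hc; apply/orP; left; apply/orP; right; apply/eqP; congr Some.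
  by apply: cside_eq => //=; rewrite (eqP Ew).
rewrite /same_edge Hc; apply/orP; right; apply/orP; right; apply/eqP; congr Some.
by apply: cside_eq => //=; move/negbT: Ew; case: (w.1.2 (+) b); case: (x.1.2).
Qed.

Lemma tri_cnext (u : cside n) : (proj (cnext u)).1 = (proj u).1.
Proof. by []. Qed.

Lemma cnext_neq (u : cside n) : proj (cnext u) <> proj u.
Proof.
case: u => [[t e] c]; rewrite /proj /cnext /= => -[].
by case: e; move/(congr1 val); case: c => [[|[|[|]]] ?].
Qed.

Lemma pn_inj (u w : cside n) :
  proj u = proj w -> proj (cnext u) = proj (cnext w) -> u = w.
Proof.
case: u w => [[t e] c] [[t' e'] c']; rewrite /proj /cnext /= => -[-> ->] [].
by case: e e' => [] [] //= H; exfalso; move/(congr1 val): H; case: c' => [[|[|[|]]] ?].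
Qed.

Lemma pn_twin (u w : cside n) :
  proj u = proj (cnext w) -> proj (cnext u) = proj w -> cnext w = twin u.
Proof.
case: u w => [[t e] c] [[t' e'] c']; rewrite /proj /cnext /twin /= => -[-> H1] [H2].
subst c. case: e e' H2 => [] [] /= H2.
all: try (by []).
all: exfalso; move/(congr1 val): H2; case: c' => [[|[|[|]]] ?] //.
Qed.

Definition G (v k : cside n) : int := bq glue v k + bq glue v (twin k).

Lemma G_twinr (v k : cside n) : G v (twin k) = G v k.
Proof. by rewrite /G twinK addrC. Qed.

Lemma G_twinl (v k : cside n) : G (twin v) k = - G v k.
Proof.
rewrite /G -{1}[k]twinK !bq_twin; lra.
Qed.

Lemma G_class (v v' k k' : cside n) : se v v' -> se k k' -> G v k = G v' k'.
Proof.
move=> H1 H2; rewrite /G (bq_class H1 H2); congr (_ + _).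
by apply: bq_class => //; rewrite se_twin.
Qed.

Lemma absG (v w k l : cside n) : Ed (proj v) (proj w) -> Ed (proj k) (proj l) ->
  `|G w l| = `|G v k|.
Proof.
move=> /Ed_se /orP[H1|H1] /Ed_se /orP[H2|H2].
- by rewrite (G_class H1 H2).
- by rewrite (G_class H1 H2) G_twinr.
- by rewrite (G_class H1 H2) G_twinl normrN.
- by rewrite (G_class H1 H2) G_twinl normrN G_twinr.
Qed.

Lemma expoG (r j : side n) :
  expo glue r j = - G (Defs.lift j false) (Defs.lift r false).
Proof.
rewrite /expo /G.
have -> : Defs.lift r true = twin (Defs.lift r false) by [].
rewrite (bq_anti (Defs.lift r false)) (bq_anti (twin _)); lra.
Qed.

Lemma connect_inv (P : pred (side n)) (x y : side n) :
  (forall a b, P a -> cadj glue a b -> P b) -> P x -> connect (cadj glue) x y -> P y.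
Proof.
move=> Hs Px /connectP [p pth ->]; elim: p x Px pth => [|z p IH] x Px //=.
by case/andP=> Hxz Hp; apply: IH (Hs _ _ Px Hxz) Hp.
Qed.

Lemma cadjP (a b : side n) : cadj glue a b ->
  exists s s' bb, glue s = Some (s', bb) /\
   ((a = s /\ b = (if bb then s' else send s')) \/
    (a = send s /\ b = (if bb then send s' else s'))).
Proof.
move=> /existsP [s /existsP [s' /existsP [bb /andP [/eqP Hg Hor]]]].
exists s, s', bb; split => //.
by case/orP: Hor => /andP [/eqP -> /eqP ->]; [left|right].
Qed.

Lemma closure_contra (A B : 'I_n) :
  (forall s : side n, (s.1 == A) || (s.1 == B) ->
     exists s' bb, glue s = Some (s', bb) /\ ((s'.1 == A) || (s'.1 == B))) -> False.
Proof.
move=> Hcl.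
have [y /andP [Hc Hf]] := no_punctures HT (A, ord0).
pose P (z : side n) := (z.1 == A) || (z.1 == B).
have Py : P y.
  apply: (connect_inv _ _ Hc); last by rewrite /P eqxx.
  move=> a b Pa /cadjP [s [s' [bb [Hg Hor]]]].
  have Ps : P s by case: Hor => -[Ha _]; move: Pa; rewrite /P Ha.
  have [s2 [b2 [Hg2 Ps2]]] := Hcl s Ps.
  rewrite Hg in Hg2; case: Hg2 => Hs2 _; subst s2.
  by case: Hor => -[_ ->]; case: (bb).
move: Hf; rewrite /free_corner.
have [s1 [b1 [-> _]]] := Hcl y Py.
by have [s2 [b2 [-> _]]] := Hcl (y.1, ord_pred y.2) Py.
Qed.

Lemma self_fold (x y : side n) bb : glue x = Some (y, bb) -> x.1 = y.1 ->
  forall s : side n, s.1 = x.1 -> [\/ s = x, s = y | glue s = None].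
Proof.
wlog Hy : x y / y.2 = ordS x.2.
  move=> W Hg H1.
  have Hne : x.2 != y.2.
    apply/eqP => H2; apply: (glue_irr HT Hg).
    by case: x y Hg H1 H2 {W} => [? ?] [? ?] /= _ -> ->.
  case: (o3_adj Hne) => H2; first exact: W.
  move=> s Hs; have Hg' := glue_sym HT Hg.
  by case: (W y x H2 Hg' (esym H1) s (etrans Hs H1)) => ->; [apply: Or32|apply: Or31|apply: Or33].
case: x y Hy => [t c] [t' c'] /= -> Hg Ht s Hs; subst t'.
case: bb Hg => Hg.
  have HM := no_M1_arc HT Hg.
  case: s Hs => [ts cs] /= ->.
  by case: (o3_cover c cs) => ->; [apply: Or31|apply: Or32|apply: Or33].
exfalso.
have [z /andP [Hc Hf]] := no_punctures HT (t, ordS c).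
have Hg' := glue_sym HT Hg.
have Pz : z == (t, ordS c).
  apply: (connect_inv (P := fun w => w == (t, ordS c)) _ _ Hc) => // a b /eqP -> /cadjP.
  move=> [s0 [s' [b0 [Hg0 [[Ha ->]|[Ha ->]]]]]].
  - by rewrite -Ha Hg' in Hg0; case: Hg0 => <- <-.
  - case: s0 Ha Hg0 => [ts cs] Ha Hg0.
    have Ht : t = ts := congr1 fst Ha.
    have Hc2 : ordS c = ordS cs := congr1 snd Ha.
    have Hcs := o3_Sinj Hc2; subst ts cs.
    by rewrite Hg0 in Hg; case: Hg => -> ->.
move: Hf; rewrite (eqP Pz) /free_corner /= o3_predS Hg Hg'.
by [].
Qed.

Lemma card_tri (A : 'I_n) : #|[pred s : side n | s.1 == A]| = 3%N.
Proof.
transitivity (#|pred1 A| * #|'I_3|)%N; last by rewrite card1 card_ord.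
rewrite -cardX.
by apply: eq_card => -[a c]; rewrite !inE /= andbT.
Qed.

Lemma fill (W : seq (side n)) (A B : 'I_n) : uniq W -> size W = 6%N -> A != B ->
  (forall w, w \in W -> (w.1 == A) || (w.1 == B)) -> forall s : side n, s.1 == A -> s \in W.
Proof.
move=> U S6 AB HW s Hs.
pose WP := [pred w : side n | w \in W].
have cW : #|WP| = 6%N by rewrite -S6 -(card_uniqP U); apply: eq_card.
have H1 := cardID [pred s : side n | s.1 == A] WP.
have H2 : (#|[predI WP & [pred s : side n | s.1 == A]]| <= #|[pred s : side n | s.1 == A]|)%N.
  apply: subset_leq_card; apply/subsetP => w; rewrite !inE.
  by case/andP.
have H3 : (#|[predD WP & [pred s : side n | s.1 == A]]| <= #|[pred s : side n | s.1 == B]|)%N.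
  apply: subset_leq_card; apply/subsetP => w; rewrite !inE.
  by case/andP => /negbTE Hn /HW; rewrite Hn.
have H4 : #|[predI WP & [pred s : side n | s.1 == A]]| = #|[pred s : side n | s.1 == A]|.
  rewrite (card_tri A) in H2 *; rewrite (card_tri B) in H3. move: H1 H2 H3; rewrite cW. move: #|[predI _ & _]| #|[predD _ & _]| => a b H1 H2 H3.
  by apply/eqP; rewrite eqn_leq H2 /= -(leq_add2r b) H1 -[6%N]/(3+3)%N leq_add2l.
have Hsub : [predI WP & [pred s : side n | s.1 == A]] \subset [pred s : side n | s.1 == A].
  by apply/subsetP => w; rewrite !inE; case/andP.
move/(subset_cardP H4): Hsub => Heq.
by have := Heq s; rewrite !inE Hs andbT => ->.
Qed.

Lemma Ed_disj x z a : Ed x a -> Ed z a -> Ed x z.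
Proof. by move=> H1 /Ed_sym H2; apply: Ed_trans H1 H2. Qed.

Lemma Ed_symN x z : ~~ Ed x z -> ~~ Ed z x.
Proof. by apply: contra; apply: Ed_sym. Qed.

Lemma Ed_neq x y a b : ~~ Ed x y -> Ed x a -> Ed y b -> a != b.
Proof.
move=> Hn Ha Hb; apply/eqP => E; subst b; move/negP: Hn; apply.
exact: Ed_disj Ha Hb.
Qed.

Lemma Ed_glued x b : glue x != None -> Ed x b -> glue b != None.
Proof.
rewrite /Ed; case E: (glue x) => [[s bb]|] // _ /orP[/eqP->|/eqP->]; first by rewrite E.
by rewrite (glue_sym HT E).
Qed.

Lemma Ed_partner e s s' bb : Ed e s -> glue s = Some (s', bb) -> Ed e s'.
Proof.
move=> H1 H2; apply: Ed_trans H1 _; by rewrite /Ed H2 eqxx orbT.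
Qed.

Lemma Ed_two_glued z p q : Ed z p -> Ed z q -> p != q -> glue z != None.
Proof.
rewrite /Ed; case: (glue z) => [[s bb]|] //; rewrite !orbF => /eqP-> /eqP->.
by rewrite eqxx.
Qed.

Lemma fin_contra (x y z : side n) :
  glue x != None -> glue y != None -> ~~ Ed x y -> ~~ Ed x z -> ~~ Ed y z ->
  forall b1 a1 b2 a2 d1 c1 d2 c2 : side n,
  (b1, a1) != (b2, a2) -> Ed x b1 -> Ed x b2 -> Ed z a1 -> Ed z a2 ->
  b1.1 = a1.1 -> b2.1 = a2.1 ->
  (d1, c1) != (d2, c2) -> Ed y d1 -> Ed y d2 -> Ed z c1 -> Ed z c2 ->
  d1.1 = c1.1 -> d2.1 = c2.1 -> False.
Proof.
move=> Gx Gy Nxy Nxz Nyz b1 a1 b2 a2 d1 c1 d2 c2 Hba Hb1 Hb2 Ha1 Ha2 Ht1 Ht2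
  Hdc Hd1 Hd2 Hc1 Hc2 Ht3 Ht4.
have Nzx := Ed_symN Nxz; have Nzy := Ed_symN Nyz.
case: (boolP [exists p, exists q, [&& Ed z p, Ed z q & p.1 != q.1]]) => [|Hno].
  case/existsP => p /existsP [q /and3P [Hp Hq Hpq]].
  have Hpq' : p != q by apply: contraNneq Hpq => ->.
  have Hz a : Ed z a -> a = p \/ a = q.
    move=> Ha; case: (Ed_le2 Ha Hp Hq) => E; [by left|by right|].
    by rewrite E eqxx in Hpq'.
  have Tz a : Ed z a -> (a.1 == p.1) || (a.1 == q.1).
    by case/Hz => ->; rewrite eqxx ?orbT.
  have Tb (e f1 f2 g1 g2 : side n) : (f1, g1) != (f2, g2) -> Ed z g1 -> Ed z g2 ->
      f1.1 = g1.1 -> f2.1 = g2.1 -> f1 != f2.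
    move=> H Hg1 Hg2 E1 E2; apply/eqP => E; subst f2.
    have Hg : g1 != g2 by apply: contraNneq H => ->.
    rewrite E1 in E2.
    case: (Hz _ Hg1) => Eg1; case: (Hz _ Hg2) => Eg2; subst g1 g2;
      rewrite ?eqxx // in Hg.
      by rewrite E2 eqxx in Hpq.
    by rewrite E2 eqxx in Hpq.
  have Nb := Tb x _ _ _ _ Hba Ha1 Ha2 Ht1 Ht2.
  have Nd := Tb y _ _ _ _ Hdc Hc1 Hc2 Ht3 Ht4.
  have Tx s : Ed x s -> (s.1 == p.1) || (s.1 == q.1).
    move=> Hs; case: (Ed_le2 Hs Hb1 Hb2) => [->|->|E]; last by rewrite E eqxx in Nb.
      by rewrite Ht1; apply: Tz.
    by rewrite Ht2; apply: Tz.
  have Ty s : Ed y s -> (s.1 == p.1) || (s.1 == q.1).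
    move=> Hs; case: (Ed_le2 Hs Hd1 Hd2) => [->|->|E]; last by rewrite E eqxx in Nd.
      by rewrite Ht3; apply: Tz.
    by rewrite Ht4; apply: Tz.
  pose W := [:: b1; b2; d1; d2; p; q].
  have Gz := Ed_two_glued Hp Hq Hpq'.
  have U : uniq W.
    rewrite /W /= !inE !negb_or Nb Nd Hpq'.
    rewrite !(Ed_neq Nxy Hb1 Hd1, Ed_neq Nxy Hb1 Hd2, Ed_neq Nxy Hb2 Hd1, Ed_neq Nxy Hb2 Hd2).
    rewrite !(Ed_neq Nxz Hb1 Hp, Ed_neq Nxz Hb1 Hq, Ed_neq Nxz Hb2 Hp, Ed_neq Nxz Hb2 Hq).
    by rewrite !(Ed_neq Nyz Hd1 Hp, Ed_neq Nyz Hd1 Hq, Ed_neq Nyz Hd2 Hp, Ed_neq Nyz Hd2 Hq).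
  have mem6 (P : side n -> Prop) w : w \in W -> P b1 -> P b2 -> P d1 -> P d2 -> P p -> P q -> P w.
    by rewrite /W !inE => /orP[/eqP->|/orP[/eqP->|/orP[/eqP->|/orP[/eqP->|/orP[/eqP->|/eqP->]]]]].
  have HW w : w \in W -> (w.1 == p.1) || (w.1 == q.1).
    move=> Hw; apply: (mem6 (fun w => (w.1 == p.1) || (w.1 == q.1)) w Hw).
    - exact: Tx Hb1.
    - exact: Tx Hb2.
    - exact: Ty Hd1.
    - exact: Ty Hd2.
    - exact: Tz Hp.
    - exact: Tz Hq.
  have HW' w : w \in W -> (w.1 == q.1) || (w.1 == p.1).
    by move/HW; rewrite orbC.
  have Hin s : (s.1 == p.1) || (s.1 == q.1) -> s \in W.
    case/orP => Hs; first exact: (fill U erefl Hpq HW).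
    by apply: (fill U erefl _ HW' Hs); rewrite eq_sym.
  apply: (closure_contra (A := p.1) (B := q.1)) => s /Hin.
  move=> Hs.
  have [e [Ge [He T]]] : exists e, [/\ glue e != None, Ed e s &
      forall s', Ed e s' -> (s'.1 == p.1) || (s'.1 == q.1)].
    apply: (mem6 (fun s => exists e, [/\ glue e != None, Ed e s &
      forall s', Ed e s' -> (s'.1 == p.1) || (s'.1 == q.1)]) s Hs).
    - by exists x.
    - by exists x.
    - by exists y.
    - by exists y.
    - by exists z.
    - by exists z.
  have := Ed_glued Ge He; case E: (glue s) => [[s' bb]|] // _.
  by exists s', bb; split => //; apply: T; apply: Ed_partner He E.
have Hall a a' : Ed z a -> Ed z a' -> a.1 = a'.1.
  move=> H1 H2; apply/eqP; apply: contraNT Hno => H.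
  by apply/existsP; exists a; apply/existsP; exists a'; rewrite H1 H2 H.
have E1 : a1.1 = c1.1 := Hall _ _ Ha1 Hc1.
have E2 : a2.1 = c1.1 := Hall _ _ Ha2 Hc1.
case: (eqVneq b1 b2) => [Eb|Nb].
{ subst b2.
  have Ha : a1 != a2 by apply: contraNneq Hba => ->.
  apply: (no4 (s1 := a1) (s2 := a2) (s3 := b1) (s4 := d1)).
  all: try (by rewrite ?E1 ?E2 ?Ht1 ?Ht2 ?Ht3).
  - exact: (Ed_neq Nzx Ha1 Hb1).
  - exact: (Ed_neq Nzy Ha1 Hd1).
  - exact: (Ed_neq Nzx Ha2 Hb1).
  - exact: (Ed_neq Nzy Ha2 Hd1).
  - exact: (Ed_neq Nxy Hb1 Hd1). }
apply: (no4 (s1 := b1) (s2 := b2) (s3 := d1) (s4 := a1)).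
all: try (by rewrite ?Ht1 ?Ht2 ?E1 ?E2 ?Ht3).
- exact: (Ed_neq Nxy Hb1 Hd1).
- exact: (Ed_neq Nxz Hb1 Ha1).
- exact: (Ed_neq Nxy Hb2 Hd1).
- exact: (Ed_neq Nxz Hb2 Ha1).
- exact: (Ed_neq Nyz Hd1 Ha1).
Qed.

Lemma two_of (T : finType) (A B : pred T) : (forall x, A x -> B x -> False) ->
  (2 <= #|A| + #|B|)%N -> exists x y, [/\ x != y, A x || B x & A y || B y].
Proof.
move=> Hd H2.
have H0 : #|[predI A & B]| = 0%N.
  by apply: eq_card0 => x; rewrite !inE; apply/negP => /andP [H1 H3]; apply: (Hd x).
have := cardUI A B; rewrite H0 addn0 => HU.
have : (1 < #|[predU A & B]|)%N by rewrite HU.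
by case/card_gt1P => x [y [Hx Hy Hxy]]; exists x, y; rewrite !inE in Hx Hy.
Qed.

Lemma pair_lemma (X k : cside n) : (2 <= `|G X k|)%R ->
  exists b1 a1 b2 a2 : side n, [/\ (b1, a1) != (b2, a2),
    Ed (proj X) b1 && Ed (proj X) b2, Ed (proj k) a1 && Ed (proj k) a2 &
    (b1.1 == a1.1) && (b2.1 == a2.1)].
Proof.
move=> HG.
have Hcase : (2 <= narrows glue X k + narrows glue X (twin k))%N \/
             (2 <= narrows glue k X + narrows glue (twin k) X)%N.
  move: HG; rewrite /G /bq ler_normr.
  move: (narrows glue X k) (narrows glue X (twin k)) (narrows glue k X)
        (narrows glue (twin k) X) => a b c d.
  case/orP => H; [left|right]; lia.
have Ek (w : cside n) : se w k || se w (twin k) -> Ed (proj k) (proj w).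
  by case/orP => /se_Ed.
case: Hcase => Hc.
  pose A := [pred u | se u X && se (cnext u) k].
  pose B := [pred u | se u X && se (cnext u) (twin k)].
  have Hd : forall u, A u -> B u -> False.
    move=> u /andP [_ Ha] /andP [_ Hb].
    by apply: (se_twin_contra Ha); rewrite -[k]twinK se_twin.
  have [u1 [u2 [Hne H1 H2]]] := two_of Hd Hc.
  exists (proj u1), (proj (cnext u1)), (proj u2), (proj (cnext u2)).
  move: H1 H2; rewrite /= -!andb_orr => /andP [H1 H1'] /andP [H2 H2'].
  split.
  - apply: contraNneq Hne => E; apply/eqP; apply: pn_inj; [exact: (congr1 fst E) | exact: (congr1 snd E)].
  - by rewrite !se_Ed.
  - by rewrite !Ek.
  - by rewrite !eqxx.
pose A := [pred u | se u k && se (cnext u) X].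
pose B := [pred u | se u (twin k) && se (cnext u) X].
have Hd : forall u, A u -> B u -> False.
  move=> u /andP [Ha _] /andP [Hb _].
  by apply: (se_twin_contra Ha); rewrite -[k]twinK se_twin.
have [u1 [u2 [Hne H1 H2]]] := two_of Hd Hc.
exists (proj (cnext u1)), (proj u1), (proj (cnext u2)), (proj u2).
move: H1 H2; rewrite /= -!andb_orl => /andP [H1 H1'] /andP [H2 H2'].
split.
- apply: contraNneq Hne => E; apply/eqP; apply: pn_inj; [exact: (congr1 snd E) | exact: (congr1 fst E)].
- by rewrite !se_Ed.
- by rewrite !Ek.
- by rewrite !eqxx.
Qed.

Lemma narrows_pos (x y : cside n) : (0 < narrows glue x y)%N ->
  exists u, se u x && se (cnext u) y.
Proof. by case/card_gt0P => u; rewrite inE => H; exists u. Qed.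

Lemma pair1 (Y k : cside n) : G Y k != 0 ->
  exists b a : side n, [/\ Ed (proj Y) b, Ed (proj k) a & b.1 = a.1].
Proof.
move=> HG.
have Ek (w : cside n) : se w k || se w (twin k) -> Ed (proj k) (proj w).
  by case/orP => /se_Ed.
have : [|| (0 < narrows glue Y k)%N, (0 < narrows glue k Y)%N,
           (0 < narrows glue Y (twin k))%N | (0 < narrows glue (twin k) Y)%N].
  move: HG; rewrite /G /bq !lt0n; apply: contraR.
  by rewrite !negb_or !negbK => /and4P [/eqP-> /eqP-> /eqP-> /eqP->].
case/or4P => /narrows_pos [u /andP [Hu Hu']].
- exists (proj u), (proj (cnext u)); split => //; first exact: se_Ed.
  by apply: Ek; rewrite Hu'.
- exists (proj (cnext u)), (proj u); split => //; first exact: se_Ed.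
  by apply: Ek; rewrite Hu.
- exists (proj u), (proj (cnext u)); split => //; first exact: se_Ed.
  by apply: Ek; rewrite Hu' orbT.
- exists (proj (cnext u)), (proj u); split => //; first exact: se_Ed.
  by apply: Ek; rewrite Hu orbT.
Qed.

Lemma self_case (X Y k : cside n) : ~~ Ed (proj X) (proj Y) -> glue (proj Y) != None ->
  Ed (proj X) (proj k) -> G X k != 0 -> G Y k != 0 -> False.
Proof.
move=> NXY GY EXk HX HY.
have HXX : bq glue X (twin X) != 0.
  have := absG (Ed_refl (proj X)) EXk; rewrite /G (bq_self (se_refl X)) add0r => E.
  by rewrite -normr_eq0 -E normr_eq0.
have [s1 [s2 [Hs1 Hs2 Hne Ht]]] : exists s1 s2, [/\ Ed (proj X) s1, Ed (proj X) s2,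
    s1 != s2 & s1.1 = s2.1].
  move: HXX; rewrite /bq.
  case H1: (narrows glue X (twin X)) => [|a].
    case H2: (narrows glue (twin X) X) => [|b]; first by rewrite subrr.
    move=> _; have [u /andP [Hu Hu']] : exists u, se u (twin X) && se (cnext u) X.
      by apply: narrows_pos; rewrite H2.
    exists (proj u), (proj (cnext u)); split => //.
    - by have := se_Ed Hu; rewrite proj_twin.
    - exact: se_Ed.
    - by apply/eqP => E; apply: (@cnext_neq u).
  move=> _; have [u /andP [Hu Hu']] : exists u, se u X && se (cnext u) (twin X).
    by apply: narrows_pos; rewrite H1.
  exists (proj u), (proj (cnext u)); split => //.
  - exact: se_Ed.
  - by have := se_Ed Hu'; rewrite proj_twin.
  - by apply/eqP => E; apply: (@cnext_neq u).
have E12 : Ed s1 s2 := Ed_trans (Ed_sym Hs1) Hs2.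
have [bb Hg] : exists bb, glue s1 = Some (s2, bb).
  move: E12; rewrite /Ed eq_sym (negbTE Hne) /=.
  by case: (glue s1) => [[s' bb]|] // /eqP ->; exists bb.
have Hf := self_fold Hg Ht.
have [c [a [Hc Ha Hca]]] := pair1 HY.
have Ha' : Ed (proj X) a := Ed_trans EXk Ha.
have Hat : a.1 = s1.1.
  case: (Ed_le2 Ha' Hs1 Hs2) => [E|E|E]; [by rewrite E | by rewrite E Ht | ].
  by rewrite E eqxx in Hne.
have Gc : glue c != None := Ed_glued GY Hc.
case: (Hf c (etrans Hca Hat)) => [E|E|E]; last by rewrite E in Gc.
- by move/negP: NXY; apply; apply: (Ed_disj Hs1); rewrite -E.
- by move/negP: NXY; apply; apply: (Ed_disj Hs2); rewrite -E.
Qed.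

Lemma se_proj_inj (a a' b : cside n) : se a b -> se a' b -> proj a = proj a' -> a = a'.
Proof.
move=> H1 H2 Hp; have := se_trans H1 (se_sym H2).
rewrite /same_edge => /orP[/eqP //|/eqP Hc].
by exfalso; apply: (cp_proj Hc); rewrite Hp.
Qed.

Lemma caseB_aux (v k u u' w : cside n) : ~~ Ed (proj v) (proj k) ->
  se u v -> se (cnext u) k -> se u' v -> se (cnext u') k -> proj u != proj u' ->
  se w (twin k) -> se (cnext w) v -> proj (cnext w) = proj u -> False.
Proof.
move=> Nvk Hu Hu' Hv Hv' Huu Hw Hw' Hpw.
have Eq1 : Ed (proj k) (proj (cnext u)) := se_Ed Hu'.
have Er : Ed (proj k) (proj w) by have := se_Ed Hw; rewrite proj_twin.
have Nq : proj (cnext u) != proj w.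
  apply/eqP => E; have := pn_twin (esym Hpw) E => Ew.
  by apply: (se_twin_contra Hu); rewrite -Ew.
have Eq2 : Ed (proj k) (proj (cnext u')) := se_Ed Hv'.
have Ht : (proj u').1 = (proj u).1.
  rewrite -tri_cnext; case: (Ed_le2 Eq2 Eq1 Er) => [->|->|E].
  - by rewrite tri_cnext.
  - by rewrite -[(proj w).1]tri_cnext Hpw.
  - by rewrite E eqxx in Nq.
apply: (no4 (s1 := proj u) (s2 := proj u') (s3 := proj (cnext u)) (s4 := proj w)).
- by rewrite Ht.
- by rewrite tri_cnext.
- by rewrite -[(proj w).1]tri_cnext Hpw.
- exact: Huu.
- exact: (Ed_neq Nvk (se_Ed Hu) Eq1).
- exact: (Ed_neq Nvk (se_Ed Hu) Er).
- exact: (Ed_neq Nvk (se_Ed Hv) Eq1).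
- exact: (Ed_neq Nvk (se_Ed Hv) Er).
- exact: Nq.
Qed.

Lemma caseB (v k : cside n) : ~~ Ed (proj v) (proj k) ->
  (2 <= narrows glue v k)%N -> narrows glue (twin k) v = 0%N.
Proof.
move=> Nvk /card_gt1P [u1 [u2 [H1 H2 Hne]]].
rewrite !inE in H1 H2; case/andP: H1 => Hu1 Hu1'; case/andP: H2 => Hu2 Hu2'.
apply/eqP; rewrite -leqn0 leqNgt; apply/negP => /narrows_pos [w /andP [Hw Hw']].
have Np : proj u1 != proj u2.
  by apply: contra Hne => /eqP E; apply/eqP; apply: se_proj_inj Hu1 Hu2 E.
case: (Ed_le2 (se_Ed Hw') (se_Ed Hu1) (se_Ed Hu2)) => [E|E|E].
- exact: (caseB_aux Nvk Hu1 Hu1' Hu2 Hu2' Np Hw Hw' E).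
- by apply: (caseB_aux Nvk Hu2 Hu2' Hu1 Hu1' _ Hw Hw' E); rewrite eq_sym.
- by rewrite E eqxx in Np.
Qed.

Lemma trep_Ed s : Ed s (trep glue s).
Proof.
rewrite /trep /Ed; case E: (glue s) => [[s' b]|]; last by rewrite eqxx.
by case: ifP => _; rewrite eqxx ?orbT.
Qed.

Lemma Ed_trep a b : Ed a b -> trep glue a = trep glue b.
Proof.
rewrite /Ed => /orP[/eqP->//|]; case E: (glue a) => [[s b0]|] // /eqP Hb; subst s.
have E2 := glue_sym HT E.
have Hne : enum_rank b != enum_rank a.
  by rewrite (inj_eq enum_rank_inj); apply/eqP; apply: (glue_irr HT E).
rewrite /trep E E2; case: (ltngtP (enum_rank b) (enum_rank a)) => // H.
by move/val_inj: H => H; rewrite H eqxx in Hne.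
Qed.

Lemma trep_idem s : trep glue (trep glue s) = trep glue s.
Proof. by rewrite -(Ed_trep (trep_Ed s)). Qed.

Lemma trep_isQv bv s : isQv glue bv s -> isQv glue bv (trep glue s).
Proof.
rewrite /isQv /trep; case E: (glue s) => [[s' b]|] //= Hq; last by rewrite E.
case: ifP => _; first by rewrite (glue_sym HT E).
by rewrite E.
Qed.

Lemma proj_lift (s : side n) e : proj (Defs.lift s e) = s.
Proof. by case: s. Qed.

End S.

Lemma prod_pick (T : finType) (P : pred T) (a : T -> nat) (r0 : T) (x : int) :
  \prod_(r | P r) (if r == r0 then x else 1) ^+ a r = if P r0 then x ^+ a r0 else 1.
Proof.
rewrite big_mkcond (bigD1 r0) //= eqxx big1 ?mulr1 => [|r /negbTE ->].
  by case: (P r0).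
by rewrite expr1n; case: (P r).
Qed.

Lemma Feval n (glue : gluing n) (bv : pred (side n)) (r0 j : side n) :
  trep glue r0 = r0 -> isQv glue bv r0 ->
  meval (fun m => if m == enum_rank r0 then 2 else 1) (Fpoly glue bv j)
  = 2 ^+ absz (expo glue r0 j) + 1.
Proof.
move=> Htr Hq; rewrite /Fpoly mevalD !rmorph_prod.
have H (P : pred (side n)) :
  \prod_(r | P r) meval (fun m => if m == enum_rank r0 then 2 else 1)
       ('X_(enum_rank r) ^+ absz (expo glue r j))
  = \prod_(r | P r) (if r == r0 then (2:int) else 1) ^+ absz (expo glue r j).
  apply: eq_bigr => r _; rewrite rmorphXn /= mevalXU.
  by rewrite (inj_eq enum_rank_inj).
rewrite !H !prod_pick Htr eqxx Hq /=.
case: (ltrgt0P (expo glue r0 j)) => He.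
- by [].
- by rewrite addrC.
- by rewrite He /= expr0.
Qed.

Lemma pow2_inj (a b : nat) : (2 : int) ^+ a + 1 = 2 ^+ b + 1 -> a = b.
Proof.
move/addIr; rewrite -!natrX => /eqP; rewrite eqr_nat => /eqP.
by apply: expnI.
Qed.


Theorem lemma4p17 (n : nat) (glue : gluing n) (bv : pred (side n))
  (HT : is_triangulation glue)
  (i j : side n) (Hi : glue i != None) (Hj : glue j != None)
  (Hij : trep glue i != trep glue j)
  (HF : Fpoly glue bv i = Fpoly glue bv j) :
  forall (v k : cside n), proj v = i -> isQv glue bv (proj k) ->
    ~ (0 < bq glue v k /\ 0 < bq glue v (twin k)) /\ bq glue v k <> 2.
Proof.
have Nij : ~~ Ed glue i j by apply: contra Hij => /(Ed_trep HT) ->.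
have key (v k : cside n) : proj v = i -> isQv glue bv (proj k) ->
    2 <= G glue v k -> False.
  move=> Hv Hk HG.
  set r0 := trep glue (proj k).
  have Er0 : Ed glue (proj k) r0 := trep_Ed glue _.
  have Hexp (x : side n) (X : cside n) : proj X = x ->
      `|expo glue r0 x| = `|G glue X k|.
    move=> HX; rewrite expoG normrN; apply: absG => //.
    by rewrite (proj_lift x false) HX; apply: Ed_refl.
  have Hev := @Feval n glue bv r0 i (trep_idem HT (proj k)) (trep_isQv HT Hk).
  have Hev' := @Feval n glue bv r0 j (trep_idem HT (proj k)) (trep_isQv HT Hk).
  rewrite -/r0 in Hev Hev'.
  have Habs : absz (expo glue r0 i) = absz (expo glue r0 j).
    by apply: pow2_inj; rewrite -Hev -Hev' HF.
  pose Y := Defs.lift j false.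
  have HY : proj Y = j by rewrite proj_lift.
  have HGv : 2 <= `|G glue v k| by apply: order.Order.POrderTheory.le_trans HG (ler_norm _).
  have HGY : 2 <= `|G glue Y k|.
    by rewrite -(Hexp j Y HY) -abszE -Habs abszE (Hexp i v Hv).
  have nz (Z : cside n) : 2 <= `|G glue Z k| -> G glue Z k != 0.
    by apply: contraTneq => ->; rewrite normr0.
  case: (boolP (Ed glue i (proj k))) => Eik.
    apply: (self_case HT (X := v) (Y := Y) (k := k)).
    - by rewrite Hv HY.
    - by rewrite HY.
    - by rewrite Hv.
    - exact: nz.
    - exact: nz.
  case: (boolP (Ed glue j (proj k))) => Ejk.
    apply: (self_case HT (X := Y) (Y := v) (k := k)).
    - by rewrite Hv HY; apply: Ed_symN.
    - by rewrite Hv.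
    - by rewrite HY.
    - exact: nz.
    - exact: nz.
  have [b1 [a1 [b2 [a2 [P1 P2 P3 P4]]]]] := pair_lemma HT HGv.
  have [d1 [c1 [d2 [c2 [Q1 Q2 Q3 Q4]]]]] := pair_lemma HT HGY.
  rewrite Hv in P2; rewrite HY in Q2.
  case/andP: P2 => P2 P2'; case/andP: P3 => P3 P3'; case/andP: P4 => /eqP P4 /eqP P4'.
  case/andP: Q2 => Q2 Q2'; case/andP: Q3 => Q3 Q3'; case/andP: Q4 => /eqP Q4 /eqP Q4'.
  exact: (fin_contra HT Hi Hj Nij Eik Ejk P1 P2 P2' P3 P3' P4 P4' Q1 Q2 Q2' Q3 Q3' Q4 Q4').
move=> v k Hv Hk; split.
  case=> H1 H2; apply: (key v k Hv Hk); rewrite /G.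
  by move: H1 H2; move: (bq glue v k) (bq glue v (twin k)) => a b; lia.
move=> H2; apply: (key v k Hv Hk); rewrite /G H2.
case: (boolP (Ed glue (proj v) (proj k))) => Evk.
  case/orP: (Ed_se HT Evk) => Hs.
    by rewrite (bq_self HT (se_sym HT Hs)) in H2.
  have Hs' : same_edge glue (twin k) v.
    by move: Hs; rewrite -(se_twin glue k (twin v)) twinK.
  by rewrite (bq_self HT (se_sym HT Hs')) addr0.
have Hn : (2 <= narrows glue v k)%N.
  move: H2; rewrite /bq => /eqP; rewrite subr_eq => /eqP.
  move: (narrows glue v k) (narrows glue k v) => a b; lia.
rewrite /bq (caseB HT Evk Hn) subr0.
by rewrite -[X in X <= _]addr0 lerD2l.
Qed.
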